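(* Let $A\in\mathbb{R}^{m\times n}$ have no zero row, with rows $a_1^T,\dots,a_m^T$, let ${\bf u}=(\mu_1,\dots,\mu_m)\in\mathbb{R}^m$, $h_{k,l}=a_k^Ta_l/\|a_l\|_2^2$, and let $C({\bf u})\in\mathbb{R}^{m\times m}$ be the unit upper triangular matrix whose $(i,j)$ entry for $j>i$ is $$\sum_{v=2}^{j-i+1}(-1)^{v-1}\sum_{i=t_1<t_2<\dots<t_v=j}\ \prod_{s=1}^{v-1}\mu_{t_{s+1}}\prod_{s=1}^{v-1}h_{t_s,t_{s+1}}.$$ Let $\Lambda=\mathrm{diag}(\mu_1,\dots,\mu_m)$ and $M=\mathrm{diag}(1/\|a_1\|_2^2,\dots,1/\|a_m\|_2^2)$. Then there exists an upper triangular matrix $T_u({\bf u})\in\mathbb{R}^{m\times m}$ with diagonal entries $[T_u({\bf u})](i,i)=\mu_i\|a_i\|_2^2$ such that $\Lambda C({\bf u})=T_u({\bf u})M$.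
   Context: The inner sum runs over strictly increasing integer sequences from $i$ to $j$ of length $v$. *)

(* Defs.v *)
From HB Require Import structures.
From mathcomp Require Import all_boot all_order all_algebra.
Set Implicit Arguments. Unset Strict Implicit. Unset Printing Implicit Defensive.
Import Order.TTheory GRing.Theory Num.Theory.
Local Open Scope ring_scope.

Section Defs.
Variables (R : realFieldType) (m n : nat).

Definition rownorm2 (A : 'M[R]_(m, n)) (k : 'I_m) : R :=
  \sum_(p < n) A k p ^+ 2.

Definition hcoef (A : 'M[R]_(m, n)) (k l : 'I_m) : R :=
  (\sum_(p < n) A k p * A l p) / rownorm2 A l.

Definition chain_from_to v (t : v.-tuple 'I_m) (i j : 'I_m) : bool :=
  [&& head i t == i, last i t == j & sorted (fun a b : 'I_m => a < b)%N t].

Definition Centry (A : 'M[R]_(m, n)) (u : 'rV[R]_m) (i j : 'I_m) : R :=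
  if i == j then 1
  else if (i < j)%N then
    \sum_(2 <= v < (j - i).+2)
      (-1) ^+ v.-1 *
      \sum_(t : v.-tuple 'I_m | chain_from_to t i j)
        ((\prod_(p <- zip t (behead t)) u 0 p.2) *
         (\prod_(p <- zip t (behead t)) hcoef A p.1 p.2))
  else 0.

Definition Cmat (A : 'M[R]_(m, n)) (u : 'rV[R]_m) : 'M[R]_m :=
  \matrix_(i, j) Centry A u i j.

End Defs.

(* Main.v *)
Require Import Defs.
From HB Require Import structures.
From mathcomp Require Import all_boot all_order all_algebra.
Import Order.TTheory GRing.Theory Num.Theory.
Local Open Scope ring_scope.

Lemma rownorm2_neq0 (R : realFieldType) (m n : nat) (A : 'M[R]_(m, n)) i :
  row i A != 0 -> rownorm2 A i != 0.
Proof.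
move=> Hr; apply/negP => /eqP H; move/negP: Hr; apply; apply/eqP.
apply/rowP => p; rewrite !mxE.
have /psumr_eq0P H2 : \sum_(q < n) A i q ^+ 2 = 0 by exact: H.
have := H2 (fun q _ => sqr_ge0 _) p isT; move/eqP; by rewrite sqrf_eq0 => /eqP ->.
Qed.

Theorem lemma3p10 (R : realFieldType) (m n : nat) (A : 'M[R]_(m, n))
  (u : 'rV[R]_m) :
  (forall i : 'I_m, row i A != 0) ->
  exists T : 'M[R]_m,
    (forall i j : 'I_m, (j < i)%N -> T i j = 0) /\
    (forall i : 'I_m, T i i = u 0 i * rownorm2 A i) /\
    diag_mx u *m Cmat A u = T *m diag_mx (\row_i (rownorm2 A i)^-1).
Proof.
move=> HA.
exists (\matrix_(i, j) (u 0 i * Centry A u i j * rownorm2 A j)).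
split; [|split].
- move=> i j ji; rewrite mxE /Centry.
  have -> : (i == j) = false by apply/negbTE; rewrite neq_ltn ji orbT.
  by rewrite ltnNge ltnW //= mulr0 mul0r.
- by move=> i; rewrite mxE /Centry eqxx mulr1.
- rewrite mul_diag_mx mul_mx_diag; apply/matrixP => i j; rewrite !mxE.
  by rewrite -mulrA mulfV ?mulr1 // rownorm2_neq0.
Qed.
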